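(* Let $n\geqslant2$ be even. Then either $R[n/2]$ has maximal size among all rainbows on $\{0,\dots,n\}$, or both $R[0]$ and $R[n]$ have maximal size among all rainbows on $\{0,\dots,n\}$.
   Context: An arc is a pair $\underline{x}\to\underline{y}$ of integers $0\leqslant x<y\leqslant n$, with weight $\binom{n}{x,\,y-x,\,n-y}=\frac{n!}{x!(y-x)!(n-y)!}$. A rainbow on $\{0,\dots,n\}$ is a set of arcs $\{\underline{x_i}\to\underline{y_i}\}_{0\leqslant i\leqslant m}$ with $x_0<x_1<\dots<x_m<y_m<\dots<y_0$; its size is the sum of the weights of its arcs. For $n$ even and $0\leqslant x\leqslant n$, $R[x]$ denotes the unique rainbow with $\frac n2$ arcs whose set of endpoints is $\{0,\dots,n\}\setminus\{x\}$. *)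

(* Defs.v *)
From mathcomp Require Import all_boot.
Set Implicit Arguments. Unset Strict Implicit. Unset Printing Implicit Defensive.

(* An arc x -> y is a pair (x, y) of naturals with 0 <= x < y <= n. *)
Definition arc_weight (n : nat) (a : nat * nat) : nat :=
  n`! %/ ((a.1)`! * (a.2 - a.1)`! * (n - a.2)`!).

(* A rainbow on {0..n}: a nonempty list of arcs [(x_0,y_0); ...; (x_m,y_m)]
   with x_0 < x_1 < ... < x_m < y_m < ... < y_0 <= n. *)
Definition nested (p q : nat * nat) : bool := (p.1 < q.1) && (q.2 < p.2).

Definition is_rainbow (n : nat) (s : seq (nat * nat)) : bool :=
  [&& s != [::], sorted nested s & all (fun a => (a.1 < a.2) && (a.2 <= n)) s].

Definition rainbow_size (n : nat) (s : seq (nat * nat)) : nat :=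
  sumn [seq arc_weight n a | a <- s].

(* R[x] for n even: the unique rainbow with n/2 arcs whose endpoint set is
   {0..n} \ {x}: list the remaining points increasingly as l_0 < ... < l_{n-1}
   and take the arcs l_i -> l_{n-1-i} for i < n/2. *)
Definition R_points (n x : nat) : seq nat := [seq i <- iota 0 n.+1 | i != x].

Definition R_rainbow (n x : nat) : seq (nat * nat) :=
  [seq (nth 0 (R_points n x) i, nth 0 (R_points n x) (n.-1 - i)) | i <- iota 0 n./2].

Definition max_size (n : nat) (s : seq (nat * nat)) : Prop :=
  forall t, is_rainbow n t -> rainbow_size n t <= rainbow_size n s.

(* Main.v *)
Require Import Defs.
From mathcomp Require Import all_boot zify.
Set Implicit Arguments. Unset Strict Implicit. Unset Printing Implicit Defensive.

Definition Mb (n b : nat) := 'C(n, b) * 'C(n - b, (n - b)./2).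
Definition ev n j := \sum_(i < j) Mb n (i.*2).+2.
Definition od n j := \sum_(i < j) Mb n (i.*2).+1.
Definition H n m := if odd m then maxn (ev n m./2) (od n m./2.+1)
                    else maxn (ev n m./2) (od n m./2).

Lemma bin_step m x : x < m./2 -> 'C(m, x) <= 'C(m, x.+1).
Proof.
move=> hx.
have e := mul_bin_left m x.
have h1 : x.+1 <= m - x by lia.
rewrite -(@leq_pmul2l x.+1) // e.
by rewrite leq_mul2r h1 orbT.
Qed.

Lemma bin_le_half m x : 'C(m, x) <= 'C(m, m./2).
Proof.
have low : forall d, d <= m./2 -> 'C(m, m./2 - d) <= 'C(m, m./2).
  elim=> [|d IH] hd; first by rewrite subn0.
  apply: leq_trans (IH (ltnW hd)).
  have -> : m./2 - d = (m./2 - d.+1).+1 by lia.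
  apply: bin_step; lia.
case: (leqP x m./2) => h1.
  have -> : x = m./2 - (m./2 - x) by lia.
  apply: low; lia.
case: (leqP x m) => h2; last by rewrite bin_small.
rewrite -bin_sub //.
have -> : m - x = m./2 - (m./2 - (m - x)) by lia.
apply: low; lia.
Qed.

Lemma arcw n x y : x <= y -> y <= n ->
  arc_weight n (x, y) = 'C(n, y - x) * 'C(n - (y - x), x).
Proof.
move=> hxy hyn; rewrite /arc_weight /=.
have hb : y - x <= n by lia.
have hx : x <= n - (y - x) by lia.
have f1 := bin_fact hb.
have f2 := bin_fact hx.
have e3 : n - (y - x) - x = n - y by lia.
rewrite e3 in f2.
rewrite -f1 -f2.
set A := 'C(n, y - x); set B := 'C(n - (y - x), x).
set a := x`!; set b := (y - x)`!; set c := (n - y)`!.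
have -> : A * (b * (B * (a * c))) = (A * B) * (a * b * c) by lia.
by rewrite mulnK // !muln_gt0 !fact_gt0.
Qed.

Lemma R1 k j : j < k -> Mb (k.*2) (j.*2).+1 * (j.*2).+1 = Mb (k.*2) (j.*2) * (k - j).
Proof.
move=> hj; rewrite /Mb.
have [g Eg] : exists g, k = j + g.+1 by exists (k - j).-1; lia.
have e1 : k.*2 - (j.*2).+1 = (g.*2).+1 by lia.
have e2 : k.*2 - j.*2 = (g.+1).*2 by lia.
have e3 : ((g.*2).+1)./2 = g by lia.
have e4 : ((g.+1).*2)./2 = g.+1 by lia.
have e5 : k - j = g.+1 by lia.
rewrite e1 e2 e3 e4 e5.
have m1 := mul_bin_left (k.*2) (j.*2).
have m2 := mul_bin_diag ((g.+1).*2) g.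
rewrite e2 in m1.
have e6 : ((g.+1).*2).-1 = (g.*2).+1 by lia.
rewrite e6 in m2.
set A := 'C(k.*2, (j.*2).+1) in m1 *; set B := 'C(k.*2, j.*2) in m1 *.
set C := 'C((g.*2).+1, g) in m2 *; set D := 'C((g.+1).*2, g.+1) in m2 *.
have -> : A * C * (j.*2).+1 = ((j.*2).+1 * A) * C by lia.
rewrite m1.
have -> : (g.+1).*2 * B * C = B * ((g.+1).*2 * C) by lia.
rewrite m2; lia.
Qed.

Lemma R2 k j : j < k -> Mb (k.*2) (j.*2).+2 * (j.*2).+2 = Mb (k.*2) (j.*2).+1 * (k - j).
Proof.
move=> hj; rewrite /Mb.
have [g Eg] : exists g, k = j + g.+1 by exists (k - j).-1; lia.
have e1 : k.*2 - (j.*2).+1 = (g.*2).+1 by lia.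
have e2 : k.*2 - (j.*2).+2 = g.*2 by lia.
have e3 : ((g.*2).+1)./2 = g by lia.
have e4 : (g.*2)./2 = g by lia.
have e5 : k - j = g.+1 by lia.
rewrite e1 e2 e3 e4 e5.
have m1 := mul_bin_left (k.*2) (j.*2).+1.
have m2 := mul_bin_diag ((g.*2).+1) g.
rewrite e1 in m1.
have e6 : ((g.*2).+1).-1 = g.*2 by lia.
rewrite e6 in m2.
have bs : 'C((g.*2).+1, g.+1) = 'C((g.*2).+1, g).
  have -> : g.+1 = (g.*2).+1 - g by lia.
  by rewrite bin_sub //; lia.
rewrite bs in m2.
set A := 'C(k.*2, (j.*2).+2) in m1 *; set B := 'C(k.*2, (j.*2).+1) in m1 *.
set C := 'C((g.*2).+1, g) in m2 *; set D := 'C(g.*2, g) in m2 *.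
have -> : A * D * (j.*2).+2 = ((j.*2).+2 * A) * D by lia.
rewrite m1.
have -> : (g.*2).+1 * B * D = B * ((g.*2).+1 * D) by lia.
rewrite m2; lia.
Qed.

Lemma ratio_le a b c d : a * c = b * d -> d <= c -> 0 < c -> a <= b.
Proof. move=> e h1 h2; rewrite -(@leq_pmul2r c) // e leq_mul2l h1 orbT //. Qed.
Lemma ratio_ge a b c d : a * c = b * d -> c <= d -> 0 < c -> b <= a.
Proof. move=> e h1 h2; rewrite -(@leq_pmul2r c) // e leq_mul2l h1 orbT //. Qed.

Lemma evS n j : ev n j.+1 = ev n j + Mb n (j.*2).+2.
Proof. by rewrite /ev big_ord_recr. Qed.
Lemma odS n j : od n j.+1 = od n j + Mb n (j.*2).+1.
Proof. by rewrite /od big_ord_recr. Qed.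
Lemma ev0 n : ev n 0 = 0. Proof. by rewrite /ev big_ord0. Qed.
Lemma od0 n : od n 0 = 0. Proof. by rewrite /od big_ord0. Qed.

Lemma H_odd n j : H n (j.*2).+1 = maxn (ev n j) (od n j.+1).
Proof. rewrite /H. have -> : ((j.*2).+1)./2 = j by lia. by rewrite /= odd_double. Qed.
Lemma H_even n j : H n (j.*2) = maxn (ev n j) (od n j).
Proof. rewrite /H. have -> : (j.*2)./2 = j by lia. by rewrite odd_double. Qed.

Lemma LA k j : 3 * j + 1 <= k -> ev (k.*2) j <= od (k.*2) j.+1.
Proof.
elim: j => [|j IH] h; first by rewrite ev0.
rewrite evS odS leq_add ?IH //; first lia.
have hr := R1 (j := j.+1) (k := k) ltac:(lia).
have -> : (j.*2).+2 = (j.+1).*2 by lia.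
apply: (ratio_ge hr); lia.
Qed.

Lemma LB k j : 3 * j <= k + 1 -> od (k.*2) j <= ev (k.*2) j.
Proof.
elim: j => [|j IH] h; first by rewrite od0 ev0.
rewrite evS odS leq_add ?IH //; first lia.
have hr := R2 (j := j) (k := k) ltac:(lia).
apply: (ratio_ge hr); lia.
Qed.

Lemma Hmono1 n m : H n m <= H n m.+1.
Proof.
have [j [->|->]] : exists j, m = j.*2 \/ m = (j.*2).+1 by exists m./2; lia.
  rewrite H_even H_odd geq_max leq_maxl /= odS.
  by apply: leq_trans (leq_maxr _ _); rewrite leq_addr.
have -> : (j.*2).+2 = (j.+1).*2 by lia.
rewrite H_odd H_even geq_max leq_maxr andbT evS.
by apply: leq_trans (leq_maxl _ _); rewrite leq_addr.
Qed.

Lemma Hmono n a b : a <= b -> H n a <= H n b.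
Proof.
move=> hab; rewrite -(subnKC hab).
elim: (b - a) => [|d IH]; first by rewrite addn0.
by rewrite addnS (leq_trans IH) ?Hmono1.
Qed.

Lemma Hstep k b : 1 <= b -> b <= k.*2 ->
  Mb (k.*2) b + H (k.*2) (b - 2) <= H (k.*2) b.
Proof.
move=> h1 h2.
have [j [Eb|Eb]] : exists j, b = (j.*2).+1 \/ b = (j.*2).+2 by exists (b.-1)./2; lia.
- rewrite Eb H_odd.
  case: j Eb => [|g] Eb.
    have -> : (0.*2).+1 - 2 = 0.*2 by [].
    by rewrite H_even ev0 od0 odS od0 /= addn0 leq_maxr.
  have -> : (g.+1.*2).+1 - 2 = (g.*2).+1 by lia.
  rewrite H_odd.
  case: (leqP (ev (k.*2) g) (od (k.*2) g.+1)) => hc.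
    rewrite addnC -odS.
    exact: leq_maxr.
  
  case: (leqP (k - g.+1) (g.+1.*2).+1) => hk.
    have hr := R1 (j := g.+1) (k := k) ltac:(lia).
    have := ratio_le hr hk isT => hm.
    apply: leq_trans (leq_maxl _ _).
    rewrite evS addnC leq_add2l.
    have -> : (g.*2).+2 = g.+1.*2 by lia.
    exact: hm.
  have := LA (k := k) (j := g) ltac:(lia). rewrite leqNgt hc //.
- rewrite Eb.
  have -> : (j.*2).+2 - 2 = j.*2 by lia.
  have -> : (j.*2).+2 = (j.+1).*2 by lia.
  rewrite !H_even.
  case: (leqP (od (k.*2) j) (ev (k.*2) j)) => hc.
    rewrite addnC.
    have -> : (j.+1).*2 = (j.*2).+2 by lia.
    rewrite -evS; exact: leq_maxl.
  
  case: (leqP (k - j) (j.*2).+2) => hk.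
    have hr := R2 (j := j) (k := k) ltac:(lia).
    have := ratio_le hr hk isT => hm.
    apply: leq_trans (leq_maxr _ _).
    rewrite odS addnC leq_add2l.
    have -> : (j.+1).*2 = (j.*2).+2 by lia.
    exact: hm.
  have := LB (k := k) (j := j) ltac:(lia). rewrite leqNgt hc //.
Qed.

Lemma arc_le_M n a : a.1 <= a.2 -> a.2 <= n -> arc_weight n a <= Mb n (a.2 - a.1).
Proof.
case: a => x y /= h1 h2; rewrite arcw // /Mb leq_mul2l bin_le_half orbT //.
Qed.

Lemma bound k t m : sorted nested t ->
  all (fun a => (a.1 < a.2) && (a.2 <= k.*2)) t ->
  (forall a, ohead t = Some a -> a.2 - a.1 <= m) ->
  rainbow_size (k.*2) t <= H (k.*2) m.
Proof.
elim: t m => [|a t IH] m hs hv hh; first by [].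
rewrite /rainbow_size /= -/(rainbow_size _ t).
move: hv => /= /andP [/andP [ha1 ha2] hv].
have hb := hh a erefl.
set b := a.2 - a.1 in hb *.
have hst : sorted nested t by move: hs => /= /path_sorted.
have hhead : forall a', ohead t = Some a' -> a'.2 - a'.1 <= b - 2.
  move=> a'; case: t {IH hst hv hh} hs => [|a'' t] //= hs [<-].
  move: hs => /andP [/andP [n1 n2] _]; rewrite /b; lia.
have := IH (b - 2) hst hv hhead => hIH.
apply: leq_trans (Hmono _ hb).
apply: leq_trans (Hstep (k := k) (b := b) _ _); first apply: leq_add => //.
- apply: arc_le_M; lia.
- rewrite /b; lia.
- rewrite /b; lia.
Qed.

Lemma filter_all_id (s : seq nat) x : x \notin s -> [seq i <- s | i != x] = s.
Proof.
move=> hx; apply/all_filterP/allP => i hi; apply/eqP => e; subst.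
by rewrite hi in hx.
Qed.

Lemma RP_k k : R_points (k.*2) k = iota 0 k ++ iota k.+1 k.
Proof.
rewrite /R_points.
have -> : (k.*2).+1 = k + k.+1 by lia.
rewrite iotaD /= filter_cat /= eqxx /= !filter_all_id //.
  by rewrite mem_iota; lia.
by rewrite mem_iota; lia.
Qed.

Lemma RP_0 n : R_points n 0 = iota 1 n.
Proof. by rewrite /R_points /= filter_all_id // mem_iota. Qed.

Lemma RP_n n : R_points n n = iota 0 n.
Proof.
rewrite /R_points -addn1 iotaD filter_cat /= eqxx cats0 filter_all_id //.
by rewrite mem_iota; lia.
Qed.

Lemma sum_rev k (F : nat -> nat) :
  \sum_(i <- iota 0 k) F i = \sum_(i < k) F (k - i.+1).
Proof.
rewrite -(big_mkord xpredT (fun i => F (k - i.+1))).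
have -> : iota 0 k = index_iota 0 k by rewrite /index_iota subn0.
rewrite big_nat_rev /=.
by apply: eq_big_nat => i hi; rewrite add0n.
Qed.

Lemma size_Rk k : 0 < k -> rainbow_size (k.*2) (R_rainbow (k.*2) k) = ev (k.*2) k.
Proof.
move=> hk.
rewrite /rainbow_size /R_rainbow RP_k doubleK -map_comp sumnE big_map sum_rev /ev.
apply: eq_bigr => [[i hi]] _ /=.
have h1 : k - i.+1 < k by lia.
have h2 : ((k.*2).-1 - (k - i.+1) < k) = false by apply/negbTE; lia.
rewrite !nth_cat size_iota h1 h2 !nth_iota; try lia.
rewrite arcw; try lia.
rewrite /Mb.
have e1 : k.+1 + ((k.*2).-1 - (k - i.+1) - k) - (0 + (k - i.+1)) = (i.*2).+2 by lia.
rewrite e1 add0n.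
have -> : ((k.*2 - (i.*2).+2)./2) = k - i.+1 by lia.
by [].
Qed.

Lemma size_R0 k : 0 < k -> rainbow_size (k.*2) (R_rainbow (k.*2) 0) = od (k.*2) k.
Proof.
move=> hk.
rewrite /rainbow_size /R_rainbow RP_0 doubleK -map_comp sumnE big_map sum_rev /od.
apply: eq_bigr => [[i hi]] _ /=.
rewrite !nth_iota; try lia.
rewrite arcw; try lia.
rewrite /Mb.
have e1 : 1 + ((k.*2).-1 - (k - i.+1)) - (1 + (k - i.+1)) = (i.*2).+1 by lia.
rewrite e1.
have -> : ((k.*2 - (i.*2).+1)./2) = k - i.+1 by lia.
rewrite -(bin_sub (n := k.*2 - (i.*2).+1)); last lia.
by have -> : k.*2 - (i.*2).+1 - (1 + (k - i.+1)) = k - i.+1 by lia.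
Qed.

Lemma size_Rn k : 0 < k -> rainbow_size (k.*2) (R_rainbow (k.*2) (k.*2)) = od (k.*2) k.
Proof.
move=> hk.
rewrite /rainbow_size /R_rainbow RP_n doubleK -map_comp sumnE big_map sum_rev /od.
apply: eq_bigr => [[i hi]] _ /=.
rewrite !nth_iota; try lia.
rewrite arcw; try lia.
rewrite /Mb.
have e1 : 0 + ((k.*2).-1 - (k - i.+1)) - (0 + (k - i.+1)) = (i.*2).+1 by lia.
rewrite e1 add0n.
by have -> : ((k.*2 - (i.*2).+1)./2) = k - i.+1 by lia.
Qed.

Lemma main_k k : 0 < k ->
  max_size (k.*2) (R_rainbow (k.*2) k) \/
  (max_size (k.*2) (R_rainbow (k.*2) 0) /\ max_size (k.*2) (R_rainbow (k.*2) (k.*2))).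
Proof.
move=> hk.
have hb : forall t, is_rainbow (k.*2) t -> rainbow_size (k.*2) t <= maxn (ev (k.*2) k) (od (k.*2) k).
  move=> t /and3P [_ hs hv]; rewrite -H_even; apply: bound => //.
  move=> a; case: t hs hv => [|a' t] //= _ /andP [/andP [h1 h2] _] [<-]; lia.
move: hb; case: (leqP (od (k.*2) k) (ev (k.*2) k)) => hc hb.
  left => t ht; rewrite size_Rk //; exact: hb.
right; split => t ht.
  rewrite size_R0 //; exact: hb.
rewrite size_Rn //; exact: hb.
Qed.

Theorem lemma5p13 (n : nat) (Hn : 2 <= n) (Heven : ~~ odd n) :
  max_size n (R_rainbow n n./2) \/
  (max_size n (R_rainbow n 0) /\ max_size n (R_rainbow n n)).
Proof.
have E : (n./2).*2 = n by have := odd_double_half n; rewrite (negbTE Heven).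
have := main_k (k := n./2) ltac:(lia).
by rewrite E.
Qed.
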